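(* Let $A_i,B_i,C_i$ ($i=1,2,3$) be random variables on a probability space with values in $\{-1,1\}$, and write ${\rm E}$ for expectation. Suppose that ${\rm E}(A_1^{k_1}A_2^{k_2}A_3^{k_3}C_1^{k_4}C_2^{k_5}C_3^{k_6})={\rm E}(A_1^{k_1}A_2^{k_2}A_3^{k_3})\,{\rm E}(C_1^{k_4}C_2^{k_5}C_3^{k_6})$ for all $k_1,\dots,k_6\in\{0,1\}$; that ${\rm E}(A_i)={\rm E}(B_i)={\rm E}(C_i)=0$ for $i\in\{1,2,3\}$; that ${\rm E}(A_iB_j)={\rm E}(B_iC_j)=0$ for $i\neq j$; and that ${\rm E}(A_iB_jC_k)=0$ whenever $i,j,k\in\{1,2,3\}$ with $|\{i,j,k\}|\le2$. Then $$\frac13\sum_{i=1}^3\big({\rm E}(B_iC_i)-{\rm E}(A_iB_i)\big)-\sum_{\{i,j,k\}=\{1,2,3\}}{\rm E}(A_iB_jC_k)\le4,$$ where the last sum is over the six permutations $(i,j,k)$ of $(1,2,3)$. *)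

(* Defs.v *)
From HB Require Import structures.
From mathcomp Require Import all_boot all_order all_algebra all_fingroup.
From mathcomp Require Import all_classical all_reals all_analysis.
Set Implicit Arguments. Unset Strict Implicit. Unset Printing Implicit Defensive.

(* Main.v *)
Require Import Defs.
From HB Require Import structures.
From mathcomp Require Import all_boot all_order all_algebra all_fingroup.
From mathcomp Require Import all_classical all_reals all_analysis.
From mathcomp Require Import measurable_realfun.
From mathcomp Require Import ring lra.
Import Order.TTheory GRing.Theory Num.Theory.
Local Open Scope ring_scope.

Section infra.
Context d (T : measurableType d) (R : realType) (P : probability T R).

Definition Ef (f : T -> R) : R := fine ('E_P[f])%E.
Definition good (f : T -> R) :=
  measurable_fun setT f /\ exists2 M : R, 0 <= M & forall w, `|f w| <= M.

Lemma good_Lfun f : good f -> f \in Lfun P 1.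
Proof.
move=> [mf [M M0 hM]]; apply/Lfun1_integrable.
apply: (@le_integrable _ _ _ _ _ _ _ (EFin \o cst M)) => //.
- exact/measurable_EFinP.
- by move=> w _ /=; rewrite lee_fin (ger0_norm M0) hM.
- exact: finite_measure_integrable_cst.
Qed.

Lemma EfE f : good f -> ('E_P[f])%E = (Ef f)%:E.
Proof. by move=> g; rewrite /Ef fineK // expectation_fin_num // good_Lfun. Qed.

Lemma goodD f g : good f -> good g -> good (fun w => f w + g w).
Proof.
move=> [mf [M M0 hM]] [mg [N N0 hN]]; split; first exact: measurable_funD.
exists (M + N); first by rewrite addr_ge0.
by move=> w; rewrite (le_trans (ler_normD _ _)) // lerD.
Qed.
Lemma goodB f g : good f -> good g -> good (fun w => f w - g w).
Proof.
move=> [mf [M M0 hM]] [mg [N N0 hN]]; split; first exact: measurable_funB.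
exists (M + N); first by rewrite addr_ge0.
by move=> w; rewrite (le_trans (ler_normB _ _)) // lerD.
Qed.
Lemma goodM f g : good f -> good g -> good (fun w => f w * g w).
Proof.
move=> [mf [M M0 hM]] [mg [N N0 hN]]; split; first exact: measurable_funM.
exists (M * N); first by rewrite mulr_ge0.
by move=> w; rewrite normrM ler_pM.
Qed.
Lemma goodC k : good (fun _ => k).
Proof.
split; first exact: measurable_cst.
by exists `|k| => //.
Qed.
Lemma goodZ k f : good f -> good (fun w => k * f w).
Proof. by move=> gf; apply: goodM => //; exact: goodC. Qed.

Lemma EfD f g : good f -> good g -> Ef (fun w => f w + g w) = Ef f + Ef g.
Proof.
move=> gf gg; rewrite /Ef (_ : (fun w => f w + g w) = f \+ g) //.
by rewrite expectationD ?good_Lfun // fineD // expectation_fin_num // good_Lfun.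
Qed.
Lemma EfB f g : good f -> good g -> Ef (fun w => f w - g w) = Ef f - Ef g.
Proof.
move=> gf gg; rewrite /Ef (_ : (fun w => f w - g w) = f \- g) //.
by rewrite expectationB ?good_Lfun // fineB // expectation_fin_num // good_Lfun.
Qed.
Lemma EfZ k f : good f -> Ef (fun w => k * f w) = k * Ef f.
Proof.
move=> gf; rewrite /Ef (_ : (fun w => k * f w) = k \o* f); last first.
  by apply/funext => w; rewrite /= mulrC.
rewrite expectationZl; last exact: good_Lfun.
by rewrite (EfE _ gf) -EFinM.
Qed.
Lemma EfC k : Ef (fun _ => k) = k.
Proof. by rewrite /Ef (_ : (fun _ => k) = cst k) // expectation_cst. Qed.
Lemma Ef_le f g : good f -> good g -> (forall w, f w <= g w) -> Ef f <= Ef g.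
Proof.
move=> gf gg fg; rewrite -subr_ge0 -EfB //.
by apply: fine_ge0; apply: expectation_ge0 => w; rewrite subr_ge0.
Qed.
Lemma Ef0 f : ('E_P[f])%E = 0%E -> Ef f = 0.
Proof. by rewrite /Ef => ->. Qed.
Lemma EfM f g h : good g -> good h -> ('E_P[f] = 'E_P[g] * 'E_P[h])%E -> Ef f = Ef g * Ef h.
Proof. by move=> gg gh; rewrite /Ef => ->; rewrite (EfE _ gg) (EfE _ gh). Qed.

Lemma pm1_good (f : T -> R) : measurable_fun setT f -> (forall w, f w = 1 \/ f w = -1) -> good f.
Proof.
move=> mf h; split => //; exists 1 => // w.
by case: (h w) => ->; rewrite ?normrN normr1.
Qed.

Lemma goodN f : good f -> good (fun w => - f w).
Proof. by move=> gf; rewrite (_ : (fun w => - f w) = (fun w => (-1) * f w)); [apply: goodZ|apply/funext => w; rewrite mulN1r]. Qed.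
Lemma EfN f : good f -> Ef (fun w => - f w) = - Ef f.
Proof. by move=> gf; rewrite (_ : (fun w => - f w) = (fun w => (-1) * f w)) ?EfZ ?mulN1r //; apply/funext => w; rewrite mulN1r. Qed.



Section pointwise.
Definition pm (v : R) := v = 1 \/ v = -1.
Lemma pw1 (x y a1 a2 c1 c2 b : R) :
 pm x -> pm y -> pm a1 -> pm a2 -> pm c1 -> pm c2 -> pm b ->
 3^-1 * (b * y - x * b) - a1 * b * c2 - a2 * b * c1 <=
 1 + a1 * a2 * c1 * c2
    + 6^-1 * (1 - a1 * a2 * c1 * c2 - x * y + a1 * a2 * c1 * c2 * x * y)
    - 6^-1 * (y * a1 * c2 + y * a2 * c1 - x * a1 * c2 - x * a2 * c1).
Proof. by rewrite /pm; case=> ->; case=> ->; case=> ->; case=> ->; case=> ->; case=> ->; case=> ->; lra. Qed.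
Lemma pw2 (x y a1 a2 c1 c2 b : R) :
 pm x -> pm y -> pm a1 -> pm a2 -> pm c1 -> pm c2 -> pm b ->
 (3^-1 * (b * y - x * b) - a1 * b * c2 - a2 * b * c1) + (a1 * b * c1 + a2 * b * c2) <=
 1 - a1 * a2 - c1 * c2 + a1 * a2 * c1 * c2
    + 12^-1 * (3 + a1 * a2 + c1 * c2 - a1 * a2 * c1 * c2
       - 3 * (x * y) - a1 * a2 * x * y - c1 * c2 * x * y
       + a1 * a2 * c1 * c2 * x * y)
    + 12^-1 * (y * a1 * c1 - y * a1 * c2 - y * a2 * c1 + y * a2 * c2
       - x * a1 * c1 + x * a1 * c2 + x * a2 * c1 - x * a2 * c2).
Proof. by rewrite /pm; case=> ->; case=> ->; case=> ->; case=> ->; case=> ->; case=> ->; case=> ->; lra. Qed.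
Lemma pw3 (x y a1 a2 c1 c2 b : R) :
 pm x -> pm y -> pm a1 -> pm a2 -> pm c1 -> pm c2 -> pm b ->
 (3^-1 * (b * y - x * b) - a1 * b * c2 - a2 * b * c1) - (a1 * b * c1 + a2 * b * c2) <=
 1 + a1 * a2 + c1 * c2 + a1 * a2 * c1 * c2
    + 12^-1 * (3 - a1 * a2 - c1 * c2 - a1 * a2 * c1 * c2
       - 3 * (x * y) + a1 * a2 * x * y + c1 * c2 * x * y
       + a1 * a2 * c1 * c2 * x * y)
    - 12^-1 * (y * a1 * c1 + y * a1 * c2 + y * a2 * c1 + y * a2 * c2
       - x * a1 * c1 - x * a1 * c2 - x * a2 * c1 - x * a2 * c2).
Proof. by rewrite /pm; case=> ->; case=> ->; case=> ->; case=> ->; case=> ->; case=> ->; case=> ->; lra. Qed.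
Lemma pw6 (x y a1 a2 c1 c2 : R) :
 pm x -> pm y -> pm a1 -> pm a2 -> pm c1 -> pm c2 -> a1 * a2 * c1 * c2 * x * y <= 1.
Proof. by rewrite /pm; case=> ->; case=> ->; case=> ->; case=> ->; case=> ->; case=> ->; lra. Qed.
Lemma pw2b (a1 a2 : R) : pm a1 -> pm a2 -> -1 <= a1 * a2 <= 1.
Proof. by rewrite /pm; case=> ->; case=> ->; apply/andP; split; lra. Qed.
End pointwise.

End infra.

Ltac good_tac := repeat first [ assumption | apply: goodD | apply: goodN | apply: goodM | apply: goodC | match goal with H : forall i : 'I_3, _ |- _ => apply: H end ].
Ltac lin := repeat first [ rewrite EfD | rewrite EfN | rewrite EfZ | rewrite EfC ]; try solve [good_tac].

Arguments pw1 {R x y a1 a2 c1 c2 b}. Arguments pw2 {R x y a1 a2 c1 c2 b}. Arguments pw3 {R x y a1 a2 c1 c2 b}. Arguments pw6 {R x y a1 a2 c1 c2}. Arguments pw2b {R a1 a2}.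
Section c.
Context d (T : measurableType d) (R : realType) (P : probability T R).
Local Notation Ef := (@Ef d T R P).
Local Notation good := (@good d T R).
Lemma core (x y a1 a2 c1 c2 b : T -> R)
  (gx : good x) (gy : good y) (ga1 : good a1) (ga2 : good a2) (gc1 : good c1) (gc2 : good c2) (gb : good b)
  (hx : forall w, x w = 1 \/ x w = -1) (hy : forall w, y w = 1 \/ y w = -1)
  (ha1 : forall w, a1 w = 1 \/ a1 w = -1) (ha2 : forall w, a2 w = 1 \/ a2 w = -1)
  (hc1 : forall w, c1 w = 1 \/ c1 w = -1) (hc2 : forall w, c2 w = 1 \/ c2 w = -1)
  (hb : forall w, b w = 1 \/ b w = -1)
  (hfac : Ef (fun w => a1 w * a2 w * c1 w * c2 w) = Ef (fun w => a1 w * a2 w) * Ef (fun w => c1 w * c2 w))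
  (z1 : Ef (fun w => x w * y w) = 0)
  (z2 : Ef (fun w => a1 w * a2 w * x w * y w) = 0)
  (z3 : Ef (fun w => c1 w * c2 w * x w * y w) = 0)
  (y11 : Ef (fun w => y w * a1 w * c1 w) = 0)
  (y12 : Ef (fun w => y w * a1 w * c2 w) = 0)
  (y21 : Ef (fun w => y w * a2 w * c1 w) = 0)
  (y22 : Ef (fun w => y w * a2 w * c2 w) = 0)
  (x11 : Ef (fun w => x w * a1 w * c1 w) = 0)
  (x12 : Ef (fun w => x w * a1 w * c2 w) = 0)
  (x21 : Ef (fun w => x w * a2 w * c1 w) = 0)
  (x22 : Ef (fun w => x w * a2 w * c2 w) = 0)
  (hb1 : Ef (fun w => a1 w * b w * c1 w) = 0)
  (hb2 : Ef (fun w => a2 w * b w * c2 w) = 0) :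
  3^-1 * (Ef (fun w => b w * y w) - Ef (fun w => x w * b w))
  - Ef (fun w => a1 w * b w * c2 w) - Ef (fun w => a2 w * b w * c1 w) <= 4/3.
Proof.
pose L := fun w => 3^-1 * (b w * y w - x w * b w) - a1 w * b w * c2 w - a2 w * b w * c1 w.
have -> : 3^-1 * (Ef (fun w => b w * y w) - Ef (fun w => x w * b w))
  - Ef (fun w => a1 w * b w * c2 w) - Ef (fun w => a2 w * b w * c1 w) = Ef L.
  by rewrite /L; lin.
have gL : good L by rewrite /L; good_tac.
have m6 : Ef (fun w => a1 w * a2 w * c1 w * c2 w * x w * y w) <= 1.
  rewrite -[X in _ <= X](@EfC _ _ _ P 1); apply: Ef_le; [good_tac|good_tac|].
  by move=> w; exact: (pw6 (hx w) (hy w) (ha1 w) (ha2 w) (hc1 w) (hc2 w)).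
set al := Ef (fun w => a1 w * a2 w).
set ga := Ef (fun w => c1 w * c2 w).
have alb : -1 <= al <= 1.
  rewrite -(@EfC _ _ _ P (-1)) -[X in _ <= _ <= X](@EfC _ _ _ P 1); apply/andP; split; apply: Ef_le; try good_tac;
  by move=> w; have /andP[] := pw2b (ha1 w) (ha2 w).
have gab : -1 <= ga <= 1.
  rewrite -(@EfC _ _ _ P (-1)) -[X in _ <= _ <= X](@EfC _ _ _ P 1); apply/andP; split; apply: Ef_le; try good_tac;
  by move=> w; have /andP[] := pw2b (hc1 w) (hc2 w).
move: alb gab => /andP[al1 al2] /andP[gm1 gm2].
set m := Ef (fun w => a1 w * a2 w * c1 w * c2 w * x w * y w) in m6.
have caseI : al * ga <= 0 -> Ef L <= 4/3.
  move=> hag.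
  pose F := fun w => 1 + a1 w * a2 w * c1 w * c2 w
    + 6^-1 * (1 - a1 w * a2 w * c1 w * c2 w - x w * y w + a1 w * a2 w * c1 w * c2 w * x w * y w)
    - 6^-1 * (y w * a1 w * c2 w + y w * a2 w * c1 w - x w * a1 w * c2 w - x w * a2 w * c1 w).
  apply: (@le_trans _ _ (Ef F)).
    apply: Ef_le => //; first by rewrite /F; good_tac.
    move=> w; rewrite /L /F.
    exact: (pw1 (hx w) (hy w) (ha1 w) (ha2 w) (hc1 w) (hc2 w) (hb w)).

  rewrite /F; lin.
  rewrite hfac z1 y12 y21 x12 x21 -/al -/ga -/m.
  clearbody al ga m; clear -al1 al2 gm1 gm2 m6 hag; nra.
have caseII : 0 <= al -> 0 <= ga -> Ef L <= 4/3.
  move=> h1 h2.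
  pose F := fun w => 1 - a1 w * a2 w - c1 w * c2 w + a1 w * a2 w * c1 w * c2 w
    + 12^-1 * (3 + a1 w * a2 w + c1 w * c2 w - a1 w * a2 w * c1 w * c2 w
       - 3 * (x w * y w) - a1 w * a2 w * x w * y w - c1 w * c2 w * x w * y w
       + a1 w * a2 w * c1 w * c2 w * x w * y w)
    + 12^-1 * (y w * a1 w * c1 w - y w * a1 w * c2 w - y w * a2 w * c1 w + y w * a2 w * c2 w
       - x w * a1 w * c1 w + x w * a1 w * c2 w + x w * a2 w * c1 w - x w * a2 w * c2 w).
  pose G := fun w => L w + (a1 w * b w * c1 w + a2 w * b w * c2 w).
  have -> : Ef L = Ef G.
    by rewrite /G; lin; rewrite hb1 hb2 addr0 addr0.
  apply: (@le_trans _ _ (Ef F)).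
    apply: Ef_le => //; first by rewrite /G; good_tac.
      by rewrite /F; good_tac.
    move=> w; rewrite /G /L /F.
    exact: (pw2 (hx w) (hy w) (ha1 w) (ha2 w) (hc1 w) (hc2 w) (hb w)).

  rewrite /F; lin.
  rewrite hfac z1 z2 z3 y11 y12 y21 y22 x11 x12 x21 x22 -/al -/ga -/m.
  clearbody al ga m; clear -al1 al2 gm1 gm2 m6 h1 h2; nra.
have caseIII : al <= 0 -> ga <= 0 -> Ef L <= 4/3.
  move=> h1 h2.
  pose F := fun w => 1 + a1 w * a2 w + c1 w * c2 w + a1 w * a2 w * c1 w * c2 w
    + 12^-1 * (3 - a1 w * a2 w - c1 w * c2 w - a1 w * a2 w * c1 w * c2 w
       - 3 * (x w * y w) + a1 w * a2 w * x w * y w + c1 w * c2 w * x w * y w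
       + a1 w * a2 w * c1 w * c2 w * x w * y w)
    - 12^-1 * (y w * a1 w * c1 w + y w * a1 w * c2 w + y w * a2 w * c1 w + y w * a2 w * c2 w
       - x w * a1 w * c1 w - x w * a1 w * c2 w - x w * a2 w * c1 w - x w * a2 w * c2 w).
  pose G := fun w => L w - (a1 w * b w * c1 w + a2 w * b w * c2 w).
  have -> : Ef L = Ef G.
    by rewrite /G; lin; rewrite hb1 hb2 addr0 oppr0 addr0.
  apply: (@le_trans _ _ (Ef F)).
    apply: Ef_le => //; first by rewrite /G; good_tac.
      by rewrite /F; good_tac.
    move=> w; rewrite /G /L /F.
    exact: (pw3 (hx w) (hy w) (ha1 w) (ha2 w) (hc1 w) (hc2 w) (hb w)).

  rewrite /F; lin.
  rewrite hfac z1 z2 z3 y11 y12 y21 y22 x11 x12 x21 x22 -/al -/ga -/m.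
  clearbody al ga m; clear -al1 al2 gm1 gm2 m6 h1 h2; nra.
have [h1|h1] := leP 0 al; have [h2|h2] := leP 0 ga.
- exact: caseII.
- by apply: caseI; nra.
- by apply: caseI; nra.
- by apply: caseIII; apply: ltW.
Qed.
End c.

Lemma perm_part (R : realFieldType) (D : 'I_3 -> R) (Tt : 'I_3 -> 'I_3 -> 'I_3 -> R) :
 (forall i j k, i != j -> j != k -> i != k -> 3^-1 * D j - Tt i j k - Tt k j i <= 4/3) ->
 3^-1 * \sum_(i < 3) D i - \sum_(s : 'S_3) Tt (s 0) (s 1) (s 2) <= 4.
Proof.
move=> H.
have hx : forall x : 'I_3, \sum_(s : 'S_3) D (s x) = \sum_(s : 'S_3) D (s 1).
  move=> x; rewrite [RHS](reindex_inj (mulgI (tperm x 1))) /=.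
  by apply: eq_bigr => s _; rewrite permM tpermR.
have hall : \sum_(s : 'S_3) \sum_(x < 3) D (s x) = 6%:R * \sum_(i < 3) D i.
  rewrite (eq_bigr (fun _ => \sum_(i < 3) D i)); last first.
    by move=> s _; rewrite [RHS](reindex_inj (@perm_inj _ s)).
  by rewrite sumr_const card_Sn /= mulr_natl.
have hD : \sum_(s : 'S_3) D (s 1) = 2%:R * \sum_(i < 3) D i.
  have : 3%:R * \sum_(s : 'S_3) D (s 1) = 6%:R * \sum_(i < 3) D i.
    rewrite -hall exchange_big /= [RHS](eq_bigr (fun _ => \sum_(s : 'S_3) D (s 1))); last first.
      by move=> x _; exact: hx.
    by rewrite sumr_const card_ord mulr_natl.
  move=> h; apply: (@mulfI _ 3%:R); first by rewrite pnatr_eq0.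
  by rewrite h mulrA -natrM.
have hT : \sum_(s : 'S_3) Tt (s 0) (s 1) (s 2) = \sum_(s : 'S_3) Tt (s 2) (s 1) (s 0).
  rewrite [RHS](reindex_inj (mulgI (tperm 0 2))) /=.
  apply: eq_bigr => s _; rewrite !permM tpermL tpermR tpermD //.
have -> : 3^-1 * \sum_(i < 3) D i - \sum_(s : 'S_3) Tt (s 0) (s 1) (s 2) =
   \sum_(s : 'S_3) (6^-1 * D (s 1) - 2^-1 * (Tt (s 0) (s 1) (s 2) + Tt (s 2) (s 1) (s 0))).
  rewrite sumrB -!mulr_sumr big_split /= -hT hD.
  set a := \sum_(i < 3) D i; set t := \sum_(s : 'S_3) _.
  by field.
have hs : forall s : 'S_3, 6^-1 * D (s 1) - 2^-1 * (Tt (s 0) (s 1) (s 2) + Tt (s 2) (s 1) (s 0)) <= 2/3.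
  move=> s.
  have n01 : s 0 != s 1 by rewrite (inj_eq perm_inj).
  have n12 : s 1 != s 2 by rewrite (inj_eq perm_inj).
  have n02 : s 0 != s 2 by rewrite (inj_eq perm_inj).
  have := H _ _ _ n01 n12 n02.
  lra.
apply: (le_trans (ler_sum _ (fun s _ => hs s))).
rewrite sumr_const card_Sn (_ : (3`! = 6)%N) // -mulr_natr; lra.
Qed.

Lemma card3 (i j : 'I_3) : (#|[set i; j; i]| <= 2)%N.
Proof.
have sub : [set i; j; i] \subset [set i; j].
  by apply/fintype.subsetP => z; rewrite !inE; case: (z == i); case: (z == j).
apply: (leq_trans (subset_leq_card sub)).
by rewrite cards2; case: (i != j).
Qed.

Lemma ord3 (i : 'I_3) : i = 0 \/ i = 1 \/ i = 2.
Proof.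
case: i => [[|[|[|m]]] Hm].
- by left; apply: val_inj.
- by right; left; apply: val_inj.
- by right; right; apply: val_inj.
- by [].
Qed.

Local Open Scope ereal_scope.
Theorem proposition5p3 (d : measure_display) (T : measurableType d)
  (R : realType) (P : probability T R)
  (A B C : 'I_3 -> {RV P >-> R})
  (hA : forall i w, A i w = 1%R \/ A i w = (-1)%R)
  (hB : forall i w, B i w = 1%R \/ B i w = (-1)%R)
  (hC : forall i w, C i w = 1%R \/ C i w = (-1)%R)
  (hAC : forall k1 k2 k3 k4 k5 k6 : bool,
     'E_P[fun w => (A 0 w ^+ k1 * A 1 w ^+ k2 * A 2 w ^+ k3
                     * C 0 w ^+ k4 * C 1 w ^+ k5 * C 2 w ^+ k6)%R]
     = 'E_P[fun w => (A 0 w ^+ k1 * A 1 w ^+ k2 * A 2 w ^+ k3)%R]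
       * 'E_P[fun w => (C 0 w ^+ k4 * C 1 w ^+ k5 * C 2 w ^+ k6)%R])
  (hEA : forall i, 'E_P[A i] = 0)
  (hEB : forall i, 'E_P[B i] = 0)
  (hEC : forall i, 'E_P[C i] = 0)
  (hAB : forall i j, i != j -> 'E_P[fun w => (A i w * B j w)%R] = 0)
  (hBC : forall i j, i != j -> 'E_P[fun w => (B i w * C j w)%R] = 0)
  (hABC : forall i j k : 'I_3, (#|[set i; j; k]| <= 2)%N ->
     'E_P[fun w => (A i w * B j w * C k w)%R] = 0) :
  (3^-1)%:E * (\sum_(i < 3) ('E_P[fun w => (B i w * C i w)%R]
                             - 'E_P[fun w => (A i w * B i w)%R]))
  - \sum_(s : 'S_3) 'E_P[fun w => (A (s 0) w * B (s 1) w * C (s 2) w)%R]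
  <= 4%:E.
Proof.
Local Open Scope ring_scope.
pose Ef := @Ef d T R P.
pose good := @good d T R.
have gA : forall i, good (A i) by move=> i; apply: pm1_good => //; exact: hA.
have gB : forall i, good (B i) by move=> i; apply: pm1_good => //; exact: hB.
have gC : forall i, good (C i) by move=> i; apply: pm1_good => //; exact: hC.
have fac : forall (k1 k2 k3 k4 k5 k6 : bool) (f g h : T -> R),
  (forall w, f w = A 0 w ^+ k1 * A 1 w ^+ k2 * A 2 w ^+ k3 * C 0 w ^+ k4 * C 1 w ^+ k5 * C 2 w ^+ k6) ->
  (forall w, g w = A 0 w ^+ k1 * A 1 w ^+ k2 * A 2 w ^+ k3) ->
  (forall w, h w = C 0 w ^+ k4 * C 1 w ^+ k5 * C 2 w ^+ k6) ->
  ('E_P[f] = 'E_P[g] * 'E_P[h])%E.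
  by move=> k1 k2 k3 k4 k5 k6 f g h hf hg hh; rewrite (funext hf) (funext hg) (funext hh); exact: hAC.
have zA : forall (k1 k2 k3 k4 k5 k6 : bool) (m : 'I_3) (f : T -> R),
  (forall w, f w = A 0 w ^+ k1 * A 1 w ^+ k2 * A 2 w ^+ k3 * C 0 w ^+ k4 * C 1 w ^+ k5 * C 2 w ^+ k6) ->
  (forall w, A m w = A 0 w ^+ k1 * A 1 w ^+ k2 * A 2 w ^+ k3) -> Ef f = 0.
  move=> k1 k2 k3 k4 k5 k6 m f hf hm; apply: Ef0.
  by rewrite (fac k1 k2 k3 k4 k5 k6 f (A m) (fun w => C 0 w ^+ k4 * C 1 w ^+ k5 * C 2 w ^+ k6) hf hm (fun w => erefl)) hEA mul0e.
have zC : forall (k1 k2 k3 k4 k5 k6 : bool) (m : 'I_3) (f : T -> R),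
  (forall w, f w = A 0 w ^+ k1 * A 1 w ^+ k2 * A 2 w ^+ k3 * C 0 w ^+ k4 * C 1 w ^+ k5 * C 2 w ^+ k6) ->
  (forall w, C m w = C 0 w ^+ k4 * C 1 w ^+ k5 * C 2 w ^+ k6) -> Ef f = 0.
  move=> k1 k2 k3 k4 k5 k6 m f hf hm; apply: Ef0.
  by rewrite (fac k1 k2 k3 k4 k5 k6 f (fun w => A 0 w ^+ k1 * A 1 w ^+ k2 * A 2 w ^+ k3) (C m) hf (fun w => erefl) hm) hEC mule0.
have f0_fac : Ef (fun w => A 1 w * A 2 w * C 1 w * C 2 w) = Ef (fun w => A 1 w * A 2 w) * Ef (fun w => C 1 w * C 2 w).
  apply: EfM; [good_tac|good_tac|]. apply: (fac false true true false true true) => w /=; ring.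
have f0_z1 : Ef (fun w => A 0 w * C 0 w) = 0.
  apply: (zA true false false true false false 0) => w /=; ring.
have f0_z2 : Ef (fun w => A 1 w * A 2 w * A 0 w * C 0 w) = 0.
  apply: (zC true true true true false false 0) => w /=; ring.
have f0_z3 : Ef (fun w => C 1 w * C 2 w * A 0 w * C 0 w) = 0.
  apply: (zA true false false true true true 0) => w /=; ring.
have f0_y11 : Ef (fun w => C 0 w * A 1 w * C 1 w) = 0.
  apply: (zA false true false true true false 1) => w /=; ring.
have f0_y12 : Ef (fun w => C 0 w * A 1 w * C 2 w) = 0.
  apply: (zA false true false true false true 1) => w /=; ring.
have f0_y21 : Ef (fun w => C 0 w * A 2 w * C 1 w) = 0.
  apply: (zA false false true true true false 2) => w /=; ring.
have f0_y22 : Ef (fun w => C 0 w * A 2 w * C 2 w) = 0.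
  apply: (zA false false true true false true 2) => w /=; ring.
have f0_x11 : Ef (fun w => A 0 w * A 1 w * C 1 w) = 0.
  apply: (zC true true false false true false 1) => w /=; ring.
have f0_x12 : Ef (fun w => A 0 w * A 1 w * C 2 w) = 0.
  apply: (zC true true false false false true 2) => w /=; ring.
have f0_x21 : Ef (fun w => A 0 w * A 2 w * C 1 w) = 0.
  apply: (zC true false true false true false 1) => w /=; ring.
have f0_x22 : Ef (fun w => A 0 w * A 2 w * C 2 w) = 0.
  apply: (zC true false true false false true 2) => w /=; ring.
have f0_b1 : Ef (fun w => A 1 w * B 0 w * C 1 w) = 0.
  by apply: Ef0; apply: hABC; exact: card3.
have f0_b2 : Ef (fun w => A 2 w * B 0 w * C 2 w) = 0.
  by apply: Ef0; apply: hABC; exact: card3.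
have c0 := @core _ _ _ P (A 0) (C 0) (A 1) (A 2) (C 1) (C 2) (B 0) (gA 0) (gC 0) (gA 1) (gA 2) (gC 1) (gC 2) (gB 0) (hA 0) (hC 0) (hA 1) (hA 2) (hC 1) (hC 2) (hB 0) f0_fac f0_z1 f0_z2 f0_z3 f0_y11 f0_y12 f0_y21 f0_y22 f0_x11 f0_x12 f0_x21 f0_x22 f0_b1 f0_b2.
have f1_fac : Ef (fun w => A 0 w * A 2 w * C 0 w * C 2 w) = Ef (fun w => A 0 w * A 2 w) * Ef (fun w => C 0 w * C 2 w).
  apply: EfM; [good_tac|good_tac|]. apply: (fac true false true true false true) => w /=; ring.
have f1_z1 : Ef (fun w => A 1 w * C 1 w) = 0.
  apply: (zA false true false false true false 1) => w /=; ring.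
have f1_z2 : Ef (fun w => A 0 w * A 2 w * A 1 w * C 1 w) = 0.
  apply: (zC true true true false true false 1) => w /=; ring.
have f1_z3 : Ef (fun w => C 0 w * C 2 w * A 1 w * C 1 w) = 0.
  apply: (zA false true false true true true 1) => w /=; ring.
have f1_y11 : Ef (fun w => C 1 w * A 0 w * C 0 w) = 0.
  apply: (zA true false false true true false 0) => w /=; ring.
have f1_y12 : Ef (fun w => C 1 w * A 0 w * C 2 w) = 0.
  apply: (zA true false false false true true 0) => w /=; ring.
have f1_y21 : Ef (fun w => C 1 w * A 2 w * C 0 w) = 0.
  apply: (zA false false true true true false 2) => w /=; ring.
have f1_y22 : Ef (fun w => C 1 w * A 2 w * C 2 w) = 0.
  apply: (zA false false true false true true 2) => w /=; ring.
have f1_x11 : Ef (fun w => A 1 w * A 0 w * C 0 w) = 0.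
  apply: (zC true true false true false false 0) => w /=; ring.
have f1_x12 : Ef (fun w => A 1 w * A 0 w * C 2 w) = 0.
  apply: (zC true true false false false true 2) => w /=; ring.
have f1_x21 : Ef (fun w => A 1 w * A 2 w * C 0 w) = 0.
  apply: (zC false true true true false false 0) => w /=; ring.
have f1_x22 : Ef (fun w => A 1 w * A 2 w * C 2 w) = 0.
  apply: (zC false true true false false true 2) => w /=; ring.
have f1_b1 : Ef (fun w => A 0 w * B 1 w * C 0 w) = 0.
  by apply: Ef0; apply: hABC; exact: card3.
have f1_b2 : Ef (fun w => A 2 w * B 1 w * C 2 w) = 0.
  by apply: Ef0; apply: hABC; exact: card3.
have c1 := @core _ _ _ P (A 1) (C 1) (A 0) (A 2) (C 0) (C 2) (B 1) (gA 1) (gC 1) (gA 0) (gA 2) (gC 0) (gC 2) (gB 1) (hA 1) (hC 1) (hA 0) (hA 2) (hC 0) (hC 2) (hB 1) f1_fac f1_z1 f1_z2 f1_z3 f1_y11 f1_y12 f1_y21 f1_y22 f1_x11 f1_x12 f1_x21 f1_x22 f1_b1 f1_b2.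
have f2_fac : Ef (fun w => A 0 w * A 1 w * C 0 w * C 1 w) = Ef (fun w => A 0 w * A 1 w) * Ef (fun w => C 0 w * C 1 w).
  apply: EfM; [good_tac|good_tac|]. apply: (fac true true false true true false) => w /=; ring.
have f2_z1 : Ef (fun w => A 2 w * C 2 w) = 0.
  apply: (zA false false true false false true 2) => w /=; ring.
have f2_z2 : Ef (fun w => A 0 w * A 1 w * A 2 w * C 2 w) = 0.
  apply: (zC true true true false false true 2) => w /=; ring.
have f2_z3 : Ef (fun w => C 0 w * C 1 w * A 2 w * C 2 w) = 0.
  apply: (zA false false true true true true 2) => w /=; ring.
have f2_y11 : Ef (fun w => C 2 w * A 0 w * C 0 w) = 0.
  apply: (zA true false false true false true 0) => w /=; ring.
have f2_y12 : Ef (fun w => C 2 w * A 0 w * C 1 w) = 0.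
  apply: (zA true false false false true true 0) => w /=; ring.
have f2_y21 : Ef (fun w => C 2 w * A 1 w * C 0 w) = 0.
  apply: (zA false true false true false true 1) => w /=; ring.
have f2_y22 : Ef (fun w => C 2 w * A 1 w * C 1 w) = 0.
  apply: (zA false true false false true true 1) => w /=; ring.
have f2_x11 : Ef (fun w => A 2 w * A 0 w * C 0 w) = 0.
  apply: (zC true false true true false false 0) => w /=; ring.
have f2_x12 : Ef (fun w => A 2 w * A 0 w * C 1 w) = 0.
  apply: (zC true false true false true false 1) => w /=; ring.
have f2_x21 : Ef (fun w => A 2 w * A 1 w * C 0 w) = 0.
  apply: (zC false true true true false false 0) => w /=; ring.
have f2_x22 : Ef (fun w => A 2 w * A 1 w * C 1 w) = 0.
  apply: (zC false true true false true false 1) => w /=; ring.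
have f2_b1 : Ef (fun w => A 0 w * B 2 w * C 0 w) = 0.
  by apply: Ef0; apply: hABC; exact: card3.
have f2_b2 : Ef (fun w => A 1 w * B 2 w * C 1 w) = 0.
  by apply: Ef0; apply: hABC; exact: card3.
have c2 := @core _ _ _ P (A 2) (C 2) (A 0) (A 1) (C 0) (C 1) (B 2) (gA 2) (gC 2) (gA 0) (gA 1) (gC 0) (gC 1) (gB 2) (hA 2) (hC 2) (hA 0) (hA 1) (hC 0) (hC 1) (hB 2) f2_fac f2_z1 f2_z2 f2_z3 f2_y11 f2_y12 f2_y21 f2_y22 f2_x11 f2_x12 f2_x21 f2_x22 f2_b1 f2_b2.

have tri : forall i j k : 'I_3, i != j -> j != k -> i != k ->
  3^-1 * (Ef (fun w => B j w * C j w) - Ef (fun w => A j w * B j w))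
  - Ef (fun w => A i w * B j w * C k w) - Ef (fun w => A k w * B j w * C i w) <= 4/3.
  move=> i j k; case: (ord3 i) => [->|[->|->]]; case: (ord3 j) => [->|[->|->]];
    case: (ord3 k) => [->|[->|->]]; rewrite ?eqxx // => _ _ _;
  first [ exact: c0 | exact: c1 | exact: c2 | (rewrite addrAC; first [exact: c0 | exact: c1 | exact: c2]) ].
have gBC : forall i j, good (fun w => B i w * C j w) by move=> i j; good_tac.
have gAB : forall i j, good (fun w => A i w * B j w) by move=> i j; good_tac.
have gABC : forall i j k, good (fun w => A i w * B j w * C k w) by move=> i j k; good_tac.
have -> : (\sum_(i < 3) ('E_P[fun w => (B i w * C i w)%R] - 'E_P[fun w => (A i w * B i w)%R]))%E
   = (\sum_(i < 3) (Ef (fun w => B i w * C i w) - Ef (fun w => A i w * B i w)))%:E.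
  rewrite -sumEFin; apply: eq_bigr => i _.
  by rewrite (@EfE _ _ _ P _ (gBC i i)) (@EfE _ _ _ P _ (gAB i i)) EFinB.
have -> : (\sum_(s : 'S_3) 'E_P[fun w => (A (s 0) w * B (s 1) w * C (s 2) w)%R])%E
   = (\sum_(s : 'S_3) Ef (fun w => A (s 0) w * B (s 1) w * C (s 2) w))%:E.
  rewrite -sumEFin; apply: eq_bigr => s _.
  by rewrite (@EfE _ _ _ P _ (gABC (s 0) (s 1) (s 2))).
rewrite -EFinM -EFinB lee_fin.
exact: (@perm_part _ (fun j => Ef (fun w => B j w * C j w) - Ef (fun w => A j w * B j w))
  (fun i j k => Ef (fun w => A i w * B j w * C k w)) tri).
Qed.
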